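(* Let $H$ be a group, $A$ either the empty set or a normal subgroup of $H$, and for $1\leq l\leq m$ let $\mathcal E_{l,m}$ be the subgroup generated by all $[x_1,\ldots,x_i]^{2^{m-i-k}}$ with $l\leq i\leq m$, $0\leq k\leq m-i$, $x_1,\ldots,x_i\in H$ and at least $k$ of the entries $x_{j_1},\ldots,x_{j_k}$ ($j_1<\cdots<j_k$) lying in $A$; write $\widetilde{\mathcal E}_{l,m}$ when $A=\varnothing$. Then for all $1\leq l\leq m$, $[\mathcal E_{l,m},H]\subseteq\mathcal E_{l+1,m+1}$ and $[\widetilde{\mathcal E}_{l,m},H]\subseteq\widetilde{\mathcal E}_{l+1,m+1}$.
   Context: $[a,b]=aba^{-1}b^{-1}$; right-normed iterated commutators $[x_1,\ldots,x_n]=[x_1,[x_2,\ldots,[x_{n-1},x_n]]]$. *)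

(* Defs.v *)
From Stdlib Require Import List Arith Sorted.
Import ListNotations.

Record Group := {
  carrier :> Type;
  gmul : carrier -> carrier -> carrier;
  gone : carrier;
  ginv : carrier -> carrier;
  gmulA : forall x y z, gmul x (gmul y z) = gmul (gmul x y) z;
  gmul1l : forall x, gmul gone x = x;
  gmul1r : forall x, gmul x gone = x;
  gmulVl : forall x, gmul (ginv x) x = gone;
  gmulVr : forall x, gmul x (ginv x) = gone
}.

Section Defs.
Variable G : Group.

Definition comm (a b : G) : G :=
  gmul G a (gmul G b (gmul G (ginv G a) (ginv G b))).

(* right-normed iterated commutator [x1,...,xn] = [x1,[x2,...,[x_{n-1},x_n]]];
   [x1] = x1; the empty list is never used (we always take length i >= 1). *)
Fixpoint rcomm (xs : list G) : G :=
  match xs with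
  | [] => gone G
  | [x] => x
  | x :: ys => comm x (rcomm ys)
  end.

Fixpoint gpow (x : G) (n : nat) : G :=
  match n with
  | 0 => gone G
  | S n => gmul G x (gpow x n)
  end.

Inductive gen (S : G -> Prop) : G -> Prop :=
  | gen_base : forall x, S x -> gen S x
  | gen_one : gen S (gone G)
  | gen_mul : forall x y, gen S x -> gen S y -> gen S (gmul G x y)
  | gen_inv : forall x, gen S x -> gen S (ginv G x).

Definition normal_subgroup (A : G -> Prop) : Prop :=
  A (gone G) /\
  (forall x y, A x -> A y -> A (gmul G x y)) /\
  (forall x, A x -> A (ginv G x)) /\
  (forall g a, A a -> A (gmul G g (gmul G a (ginv G g)))).

Definition k_entries_in (A : G -> Prop) (k : nat) (xs : list G) : Prop :=
  exists js : list nat, length js = k /\ Sorted lt js /\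
    forall j, In j js -> j < length xs /\ A (nth j xs (gone G)).

Definition E_gens (A : G -> Prop) (l m : nat) (y : G) : Prop :=
  exists (i k : nat) (xs : list G),
    l <= i /\ i <= m /\ k <= m - i /\ length xs = i /\
    k_entries_in A k xs /\ y = gpow (rcomm xs) (2 ^ (m - i - k)).

Definition E (A : G -> Prop) (l m : nat) : G -> Prop := gen (E_gens A l m).

Definition Etilde (l m : nat) : G -> Prop := E (fun _ => False) l m.

Definition commH (X : G -> Prop) : G -> Prop :=
  gen (fun z => exists x h, X x /\ z = comm x h).

End Defs.

(* Main.v *)
Require Import Defs.
From Stdlib Require Import List Arith Sorted Lia.
Import ListNotations.

Local Notation "x ** y" := (gmul _ x y) (at level 40, left associativity).
Local Notation "x ^-" := (ginv _ x) (at level 3).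

Lemma gmulA' {G : Group} (x y z : G) : (x ** y) ** z = x ** (y ** z).
Proof. now rewrite gmulA. Qed.
Lemma gmulKV {G : Group} (x y : G) : x ** (x ^- ** y) = y.
Proof. now rewrite gmulA, gmulVr, gmul1l. Qed.
Lemma gmulVK {G : Group} (x y : G) : x ^- ** (x ** y) = y.
Proof. now rewrite gmulA, gmulVl, gmul1l. Qed.
Lemma inv_unique {G : Group} (x y : G) : x ** y = gone G -> x ^- = y.
Proof. intro h. rewrite <- (gmul1r _ (x ^-)), <- h, gmulA, gmulVl, gmul1l. reflexivity. Qed.
Lemma ginvM {G : Group} (x y : G) : (x ** y) ^- = y ^- ** x ^-.
Proof. apply inv_unique. now rewrite gmulA', gmulKV, gmulVr. Qed.
Lemma ginvK {G : Group} (x : G) : (x ^-) ^- = x.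
Proof. apply inv_unique, gmulVl. Qed.
Lemma ginv1 {G : Group} : (gone G) ^- = gone G.
Proof. apply inv_unique, gmul1l. Qed.
Lemma gmulVr' {G : Group} (x : G) : x ** x ^- = gone G.
Proof. apply gmulVr. Qed.
Lemma gmulVl' {G : Group} (x : G) : x ^- ** x = gone G.
Proof. apply gmulVl. Qed.
Lemma gmul1l' {G : Group} (x : G) : gone G ** x = x.
Proof. apply gmul1l. Qed.
Lemma gmul1r' {G : Group} (x : G) : x ** gone G = x.
Proof. apply gmul1r. Qed.

Global Hint Rewrite @gmulA' @gmulKV @gmulVK @ginvM @ginvK @ginv1 @gmulVr' @gmulVl'
  @gmul1l' @gmul1r' : gr.

Ltac gsimpl := unfold comm; autorewrite with gr; reflexivity.

Definition gconj {G : Group} (g x : G) : G := g ** x ** g ^-.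

Lemma gpow_add {G : Group} (x : G) a b : gpow G x (a + b) = gpow G x a ** gpow G x b.
Proof. induction a; simpl. - gsimpl. - rewrite IHa. gsimpl. Qed.

Lemma conj_gpow {G : Group} (g x : G) n : gpow G (gconj g x) n = gconj g (gpow G x n).
Proof. unfold gconj. induction n; simpl. - gsimpl. - rewrite IHn. gsimpl. Qed.

Lemma conj_rcomm {G : Group} (g : G) xs : rcomm G (map (gconj g) xs) = gconj g (rcomm G xs).
Proof.
  induction xs as [|x ys IH]; simpl. - unfold gconj; gsimpl.
  - destruct ys as [|y ys']. + reflexivity.
    + change (comm G (gconj g x) (rcomm G (map (gconj g) (y :: ys')))
              = gconj g (comm G x (rcomm G (y :: ys')))).
      rewrite IH. unfold gconj. gsimpl.
Qed.

Lemma rcomm_cons {G : Group} (x : G) xs : xs <> [] -> rcomm G (x :: xs) = comm G x (rcomm G xs).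
Proof. destruct xs; [congruence|reflexivity]. Qed.

Lemma sorted_mapS js : Sorted lt js -> Sorted lt (map S js).
Proof.
  induction 1; simpl; constructor; auto.
  inversion H0; simpl; constructor; lia.
Qed.

Lemma kent_map {G : Group} (A : G -> Prop) (f : G -> G) k xs :
  (forall a, A a -> A (f a)) -> k_entries_in G A k xs -> k_entries_in G A k (map f xs).
Proof.
  intros hf [js [h1 [h2 h3]]]. exists js. split; [exact h1|split; [exact h2|]].
  intros j hj. destruct (h3 j hj) as [a b]. rewrite length_map. split; [exact a|].
  rewrite (nth_indep _ _ (f (gone G))) by (rewrite length_map; exact a).
  rewrite map_nth. auto.
Qed.

Lemma kent_cons {G : Group} (A : G -> Prop) k (h : G) xs :
  k_entries_in G A k xs -> k_entries_in G A k (h :: xs).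
Proof.
  intros [js [h1 [h2 h3]]]. exists (map S js). split; [rewrite length_map; exact h1|].
  split; [apply sorted_mapS; exact h2|].
  intros j hj. apply in_map_iff in hj as [j' [<- hj']]. destruct (h3 j' hj') as [a b].
  simpl. split; [lia|exact b].
Qed.

Lemma gen_sub {G : Group} (S T : G -> Prop) :
  (forall x, S x -> gen G T x) -> forall x, gen G S x -> gen G T x.
Proof.
  intros hST x hx. induction hx.
  - auto. - apply gen_one. - now apply gen_mul. - now apply gen_inv.
Qed.

Lemma E_intro {G : Group} (A : G -> Prop) l m i k xs :
  l <= i -> i <= m -> k <= m - i -> length xs = i -> k_entries_in G A k xs ->
  E G A l m (gpow G (rcomm G xs) (2 ^ (m - i - k))).
Proof.
  intros. apply gen_base. exists i, k, xs.
  exact (Logic.conj H (Logic.conj H0 (Logic.conj H1 (Logic.conj H2 (Logic.conj H3 eq_refl))))).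
Qed.

Lemma E_mono {G : Group} (A : G -> Prop) l l' m x : l <= l' -> E G A l' m x -> E G A l m x.
Proof.
  intros hl. apply gen_sub. intros y [i [k [xs [a [b [c [d [e f]]]]]]]]. subst y.
  apply E_intro; auto; lia.
Qed.

Lemma E_conj {G : Group} (A : G -> Prop) (hAc : forall g a, A a -> A (gconj g a)) l m g x :
  E G A l m x -> E G A l m (gconj g x).
Proof.
  intro hx. induction hx.
  - destruct H as [i [k [xs [a [b [c [d [e f]]]]]]]]. subst x.
    rewrite <- conj_gpow, <- conj_rcomm. apply E_intro; auto.
    + rewrite length_map; auto. + apply kent_map; auto.
  - replace (gconj g (gone G)) with (gone G) by (unfold gconj; gsimpl). apply gen_one.
  - replace (gconj g (x ** y)) with (gconj g x ** gconj g y) by (unfold gconj; gsimpl).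
    now apply gen_mul.
  - replace (gconj g (x ^-)) with ((gconj g x) ^-) by (unfold gconj; gsimpl).
    now apply gen_inv.
Qed.

Lemma E_square {G : Group} (A : G -> Prop) l m :
  (forall z, commH G (E G A l m) z -> E G A (S l) (S m) z) ->
  forall x, E G A l m x -> E G A l (S m) (x ** x).
Proof.
  intros hC x hx. induction hx.
  - destruct H as [i [k [xs [a [b [c [d [e f]]]]]]]]. subst x.
    rewrite <- gpow_add.
    replace (2 ^ (m - i - k) + 2 ^ (m - i - k)) with (2 ^ (S m - i - k)).
    + apply E_intro; auto; lia.
    + replace (S m - i - k) with (S (m - i - k)) by lia. simpl. lia.
  - rewrite gmul1l. apply gen_one.
  - replace ((x ** y) ** (x ** y)) with ((x ** x) ** (comm G (x ^-) y ** (y ** y)))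
      by gsimpl.
    apply gen_mul; [exact IHhx1|]. apply gen_mul; [|exact IHhx2].
    apply (E_mono A l (S l)); [lia|]. apply hC. apply gen_base.
    exists (x ^-), y. split; [apply gen_inv; exact hx1|reflexivity].
  - replace (x ^- ** x ^-) with ((x ** x) ^-) by gsimpl. now apply gen_inv.
Qed.

Lemma commH_red {G : Group} (A : G -> Prop) (hAc : forall g a, A a -> A (gconj g a)) l m l' m' :
  (forall x h, E_gens G A l m x -> E G A l' m' (comm G x h)) ->
  forall z, commH G (E G A l m) z -> E G A l' m' z.
Proof.
  intros hg. apply gen_sub. intros z [x [h [hx ->]]]. induction hx.
  - now apply hg.
  - replace (comm G (gone G) h) with (gone G) by gsimpl. apply gen_one.
  - replace (comm G (x ** y) h) with (gconj x (comm G y h) ** comm G x h)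
      by (unfold gconj; gsimpl).
    apply gen_mul; auto. apply E_conj; auto.
  - replace (comm G (x ^-) h) with (gconj (x ^-) ((comm G x h) ^-))
      by (unfold gconj; gsimpl).
    apply E_conj; auto. now apply gen_inv.
Qed.

Lemma main {G : Group} (A : G -> Prop) (hAc : forall g a, A a -> A (gconj g a)) :
  forall d l m, 1 <= l -> m = l + d ->
    forall z, commH G (E G A l m) z -> E G A (S l) (S m) z.
Proof.
  intro d. induction d as [d IH] using lt_wf_ind. intros l m hl hm.
  apply commH_red; auto.
  intros x h [i [k [xs [a [b [c [e [f ->]]]]]]]].
  assert (hne : xs <> []) by (intro hx; rewrite hx in e; simpl in e; lia).
  destruct (m - i - k) as [|n] eqn:hn.
  - simpl. replace (comm G (rcomm G xs ** gone G) h)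
      with ((gpow G (rcomm G (h :: xs)) (2 ^ (S m - S i - k))) ^-).
    + apply gen_inv. apply E_intro; auto; try lia. simpl; lia. apply kent_cons; auto.
    + replace (S m - S i - k) with 0 by lia. rewrite rcomm_cons by auto. simpl. gsimpl.
  - set (ee := gpow G (rcomm G xs) (2 ^ n)).
    assert (hd : d >= 1) by lia.
    assert (hf : E G A (S l) m (comm G ee h)).
    { replace m with (S (m - 1)) by lia.
      apply (IH (d - 1)); try lia. apply gen_base. exists ee, h. split; [|reflexivity].
      unfold ee. replace n with (m - 1 - i - k) by lia. apply E_intro; auto; lia. }
    set (f' := comm G ee h) in *.
    assert (hC : forall z, commH G (E G A (S l) m) z -> E G A (S (S l)) (S m) z).
    { apply (IH (d - 1)); lia. }
    replace (gpow G (rcomm G xs) (2 ^ S n)) with (ee ** ee)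
      by (unfold ee; rewrite <- gpow_add; f_equal; simpl; lia).
    replace (comm G (ee ** ee) h) with ((comm G f' ee) ^- ** (f' ** f'))
      by (unfold f'; gsimpl).
    apply gen_mul.
    + apply gen_inv. apply (E_mono A (S l) (S (S l))); [lia|]. apply hC.
      apply gen_base. exists f', ee. split; auto.
    + apply E_square; auto.
Qed.

Theorem corollary5p8 (H : Group) (A : H -> Prop)
  (hA : (forall x, ~ A x) \/ normal_subgroup H A) :
  forall l m : nat, 1 <= l -> l <= m ->
    (forall z, commH H (E H A l m) z -> E H A (S l) (S m) z) /\
    (forall z, commH H (Etilde H l m) z -> Etilde H (S l) (S m) z).
Proof.
  intros l m hl hlm. split.
  - apply (main A) with (d := m - l); try lia.
    intros g a ha. destruct hA as [h0|[_ [_ [_ hn]]]].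
    + exfalso; exact (h0 a ha).
    + unfold gconj. rewrite gmulA'. apply hn; exact ha.
  - unfold Etilde. apply (main (fun _ => False)) with (d := m - l); try lia.
    all: try (intros ? ? []).  
Qed.
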